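(* Let $p$ be an odd prime and $r$ an integer with $p \nmid r$. Let $$f_{r,p}(x) = \frac{1}{2\sqrt{2}}\left((1+\sqrt{2})^r (x+\sqrt{2})^p - (1-\sqrt{2})^r (x - \sqrt{2})^p\right) \in \mathbb{Z}[x].$$ Then $f_{r,p}$ has $p$ distinct roots $\rho_0, \dots, \rho_{p-1}$ given by $$\rho_i = \sqrt{2} + \frac{2\sqrt{2}}{(-1)^r (1+\sqrt{2})^{-2r/p} \zeta_p^i - 1}, \quad 0 \leq i \leq p-1,$$ where $\zeta_p = e^{2\pi i/p}$ and $(1+\sqrt{2})^{-2r/p}$ denotes the positive real value. The only real root is $\rho_0$. *)

(* Defs.v *)
From Stdlib Require Import Reals ZArith Znumtheory.
From Coquelicot Require Import Coquelicot.
Open Scope R_scope.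

Definition f_rp (r : Z) (p : nat) (x : C) : C :=
  Cdiv (Cminus (Cmult (RtoC (powerRZ (1 + sqrt 2) r)) (Cpow (Cplus x (RtoC (sqrt 2))) p))
               (Cmult (RtoC (powerRZ (1 - sqrt 2) r)) (Cpow (Cminus x (RtoC (sqrt 2))) p)))
       (RtoC (2 * sqrt 2)).

Definition zeta (p : nat) : C := (cos (2 * PI / INR p), sin (2 * PI / INR p)).

Definition rho (r : Z) (p : nat) (i : nat) : C :=
  Cplus (RtoC (sqrt 2))
    (Cdiv (RtoC (2 * sqrt 2))
       (Cminus (Cmult (RtoC (powerRZ (-1) r * Rpower (1 + sqrt 2) (-2 * IZR r / INR p)))
                      (Cpow (zeta p) i))
               (RtoC 1))).

(* Main.v *)
Require Import Defs.
From Stdlib Require Import Reals ZArith Znumtheory.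
From Coquelicot Require Import Coquelicot.
Open Scope R_scope.
From Stdlib Require Import Lia Lra Psatz.

Definition E (t : R) : C := (cos t, sin t).

Lemma E_mult a b : Cmult (E a) (E b) = E (a + b).
Proof. unfold E, Cmult; simpl. rewrite cos_plus, sin_plus. f_equal; ring. Qed.

Lemma E_pow t n : Cpow (E t) n = E (INR n * t).
Proof.
  induction n as [|n IH].
  - simpl. rewrite Rmult_0_l. unfold E. rewrite cos_0, sin_0. reflexivity.
  - rewrite Cpow_S, IH, E_mult, S_INR. f_equal. ring.
Qed.

Lemma E_2kPI (q : Z) : E (2 * IZR q * PI) = RtoC 1.
Proof.
  unfold E. replace (2 * IZR q * PI) with (2 * (IZR q * PI)) by ring.
  rewrite cos_2a_sin, sin_2a, sin_eq_0_1; [|exists q; reflexivity].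
  unfold RtoC. f_equal; ring.
Qed.

Lemma E_period x (q : Z) : E (x + 2 * IZR q * PI) = E x.
Proof. rewrite <- E_mult, E_2kPI. apply Cmult_1_r. Qed.

Lemma cos_eq_1_inv x : cos x = 1 -> exists k : Z, x = 2 * IZR k * PI.
Proof.
  intros H. replace x with (2 * (x/2)) in H by field.
  rewrite cos_2a_sin in H.
  assert (Hs : sin (x/2) = 0) by nra.
  destruct (sin_eq_0_0 _ Hs) as [k Hk]. exists k. lra.
Qed.

Lemma E_eq1 x : E x = RtoC 1 -> exists k : Z, x = 2 * IZR k * PI.
Proof. intros H. apply cos_eq_1_inv. apply (f_equal fst) in H. exact H. Qed.

Lemma Cmod1_E v : Cmod v = 1 -> exists t, v = E t.
Proof.
  destruct v as [x y]. unfold Cmod; cbn [fst snd]. intros H.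
  assert (H2 : x^2 + y^2 = 1).
  { rewrite <- (sqrt_sqrt (x^2+y^2)) by nra. rewrite H. ring. }
  assert (Hx : -1 <= x <= 1) by nra.
  assert (Hs : sqrt (1 - x²) = Rabs y).
  { rewrite <- sqrt_Rsqr_abs. f_equal. unfold Rsqr. nra. }
  destruct (Rle_or_lt 0 y) as [Hy|Hy].
  - exists (acos x). unfold E. rewrite cos_acos, sin_acos, Hs, Rabs_right by lra; reflexivity.
  - exists (- acos x). unfold E. rewrite cos_neg, sin_neg, cos_acos, sin_acos, Hs, Rabs_left by lra.
    f_equal; ring.
Qed.

Lemma zeta_pow p i : Cpow (zeta p) i = E (INR i * (2 * PI / INR p)).
Proof. rewrite <- E_pow. reflexivity. Qed.

Lemma zeta_p p : (0 < p)%nat -> Cpow (zeta p) p = RtoC 1.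
Proof.
  intros Hp. rewrite zeta_pow. rewrite <- (E_2kPI 1).
  assert (INR p <> 0) by (apply not_0_INR; lia). f_equal. simpl. field. auto.
Qed.

Lemma pow_eq1 c n : 0 <= c -> (0 < n)%nat -> c ^ n = 1 -> c = 1.
Proof.
  intros Hc Hn H. destruct (Rtotal_order c 1) as [Hl|[He|Hg]]; auto.
  - pose proof (pow_lt_1_compat c n (conj Hc Hl) Hn). lra.
  - pose proof (Rlt_pow_R1 c n Hg Hn). lra.
Qed.

Lemma unity_root p v : (0 < p)%nat -> Cpow v p = RtoC 1 ->
  exists k, (k < p)%nat /\ v = Cpow (zeta p) k.
Proof.
  intros Hp H.
  assert (Hm : Cmod v = 1).
  { apply (pow_eq1 _ p); auto. apply Cmod_ge_0. rewrite <- Cmod_pow, H. apply Cmod_1. }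
  destruct (Cmod1_E v Hm) as [t Ht]. subst v.
  rewrite E_pow in H. destruct (E_eq1 _ H) as [n Hn].
  assert (HpZ : (0 < Z.of_nat p)%Z) by lia.
  exists (Z.to_nat (n mod Z.of_nat p)). split.
  - pose proof (Z.mod_pos_bound n (Z.of_nat p) HpZ). lia.
  - rewrite zeta_pow.
    pose proof (Z.mod_pos_bound n (Z.of_nat p) HpZ).
    rewrite INR_IZR_INZ, Z2Nat.id by lia.
    pose proof (Z.div_mod n (Z.of_nat p) ltac:(lia)) as Hd.
    set (q := (n / Z.of_nat p)%Z) in *. set (k := (n mod Z.of_nat p)%Z) in *.
    assert (Hk : IZR k = IZR n - IZR (Z.of_nat p) * IZR q).
    { rewrite Hd at 1. rewrite plus_IZR, mult_IZR. ring. }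
    assert (INR p <> 0) by (apply not_0_INR; lia).
    rewrite Hk, <- (E_period _ (- q)). f_equal. rewrite opp_IZR.
    rewrite <- INR_IZR_INZ. apply (Rmult_eq_reg_l (INR p)); auto.
    rewrite Rmult_plus_distr_l, Hn. clearbody q k. field. auto.
Qed.

Lemma zeta_inj p i j : (i < p)%nat -> (j < p)%nat ->
  Cpow (zeta p) i = Cpow (zeta p) j -> i = j.
Proof.
  intros Hi Hj H. rewrite !zeta_pow in H.
  set (a := INR i * (2 * PI / INR p)) in *. set (b := INR j * (2 * PI / INR p)) in *.
  assert (E (a + - b) = RtoC 1).
  { rewrite <- E_mult, H, E_mult. replace (b + - b) with (2 * IZR 0 * PI) by (simpl; ring).
    apply E_2kPI. }
  destruct (E_eq1 _ H0) as [n Hn].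
  assert (INR p <> 0) by (apply not_0_INR; lia).
  assert (Hr : INR i - INR j = IZR n * INR p).
  { unfold a, b in Hn. apply (Rmult_eq_reg_r (2 * PI / INR p)).
    - rewrite Rmult_minus_distr_r. unfold Rminus. rewrite Hn. field. auto.
    - pose proof PI_RGT_0. apply Rmult_integral_contrapositive_currified; [lra|].
      apply Rinv_neq_0_compat; auto. }
  rewrite !INR_IZR_INZ, <- minus_IZR, <- mult_IZR in Hr.
  apply eq_IZR in Hr. destruct (Z.lt_trichotomy n 0) as [h|[h|h]]; [nia|subst; lia|nia].
Qed.

Lemma RtoC_neq0 x : x <> 0 -> RtoC x <> RtoC 0.
Proof. intros H E0. apply H. apply (f_equal fst) in E0. exact E0. Qed.

Lemma Cmod_E t : Cmod (E t) = 1.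
Proof.
  unfold Cmod, E; cbn [fst snd]. rewrite <- sqrt_1. f_equal.
  pose proof (sin2_cos2 t). unfold Rsqr in H. nra.
Qed.

Lemma p_odd (p : nat) : prime (Z.of_nat p) -> p <> 2%nat -> exists k, p = S (2 * k).
Proof.
  intros hp hodd. destruct (Nat.Even_or_Odd p) as [[k Hk]|[k Hk]].
  - exfalso. assert (Hd : (2 | Z.of_nat p)%Z) by (exists (Z.of_nat k); lia).
    pose proof (prime_ge_2 _ hp).
    destruct (prime_divisors _ hp 2 Hd) as [h|[h|[h|h]]]; lia.
  - exists k. lia.
Qed.

Section Real.
Variables (p : nat) (r : Z).
Hypothesis (hp : (0 < p)%nat) (hr0 : r <> 0%Z) (hk : exists k, p = S (2 * k)).

Let s := sqrt 2.
Let a := 1 + s.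
Let c := Rpower a (-2 * IZR r / INR p).
Let sg := powerRZ (-1) r.
Let m := sg * c.

Lemma s_facts : s * s = 2 /\ 1 < s.
Proof. unfold s. pose proof (sqrt_sqrt 2 ltac:(lra)). pose proof (sqrt_pos 2). split; nra. Qed.

Lemma sg_sq : sg * sg = 1.
Proof. unfold sg. rewrite <- powerRZ_mult. replace (-1 * -1) with 1 by ring. apply powerRZ_R1. Qed.

Lemma sg_pow : sg ^ p = sg.
Proof.
  destruct hk as [k ->]. replace (S (2*k)) with (2*k+1)%nat by lia. rewrite pow_add, pow_mult.
  replace (sg^2) with 1 by (simpl; rewrite Rmult_1_r; symmetry; apply sg_sq). rewrite pow1. ring.
Qed.

Lemma c_pos : 0 < c.
Proof. unfold c, Rpower. apply exp_pos. Qed.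

Lemma c_ne1 : c <> 1.
Proof.
  pose proof s_facts. assert (Ha : 1 < a) by (unfold a; lra).
  assert (INR p > 0) by (apply lt_0_INR; lia).
  unfold c. rewrite <- (Rpower_O a) by lra. intro H1.
  assert (Hq : -2 * IZR r / INR p = -2 * (IZR r / INR p)) by (field; lra).
  rewrite Hq in H1.
  destruct (Z.lt_trichotomy r 0) as [h|[h|h]].
  - apply IZR_lt in h. assert (IZR r / INR p < 0).
    { unfold Rdiv. apply Rmult_neg_pos; [lra| apply Rinv_0_lt_compat; lra]. }
    assert (0 < -2 * (IZR r / INR p)) by lra.
    pose proof (Rpower_lt a 0 _ Ha H3). lra.
  - auto.
  - apply IZR_lt in h. assert (0 < IZR r / INR p).
    { unfold Rdiv. apply Rmult_lt_0_compat; [lra| apply Rinv_0_lt_compat; lra]. }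
    assert (-2 * (IZR r / INR p) < 0) by lra.
    pose proof (Rpower_lt a _ 0 Ha H3). lra.
Qed.

Lemma realkey : powerRZ (1 - s) r = powerRZ a r * m ^ p.
Proof.
  pose proof s_facts as [Hss Hs1].
  assert (Ha : 0 < a) by (unfold a; lra).
  assert (H1 : 1 - s = -1 * / a) by (unfold a; apply (Rmult_eq_reg_r (1 + s)); [field_simplify; [nra|lra] | lra]).
  rewrite H1, powerRZ_mult, powerRZ_inv'. fold sg.
  unfold m. rewrite Rpow_mult_distr, sg_pow.
  assert (INR p <> 0) by (apply not_0_INR; lia).
  unfold c. rewrite <- Rpower_pow by (unfold Rpower; apply exp_pos).
  rewrite Rpower_mult. replace (-2 * IZR r / INR p * INR p) with (- IZR r + - IZR r) by (field; auto).
  rewrite Rpower_plus, !Rpower_Ropp, powerRZ_Rpower by auto.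
  assert (Rpower a (IZR r) <> 0) by (unfold Rpower; apply Rgt_not_eq, exp_pos).
  field. auto.
Qed.

Lemma abs_m : Rabs m = c.
Proof.
  unfold m. rewrite Rabs_mult. pose proof sg_sq. pose proof c_pos.
  assert (Rabs sg = 1).
  { pose proof (Rabs_pos sg). assert (Rabs sg * Rabs sg = 1) by (rewrite <- Rabs_mult, H; apply Rabs_R1). nra. }
  rewrite H1, Rabs_right by lra. ring.
Qed.

Lemma m_ne0 : m <> 0.
Proof. intro H. pose proof abs_m. rewrite H, Rabs_R0 in H0. pose proof c_pos. lra. Qed.

End Real.

Theorem theorem4p1 (p : nat) (r : Z)
  (hp : prime (Z.of_nat p)) (hodd : p <> 2%nat) (hr : ~ (Z.divide (Z.of_nat p) r)) :
  (forall i : nat, (i < p)%nat -> f_rp r p (rho r p i) = RtoC 0) /\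
  (forall i j : nat, (i < p)%nat -> (j < p)%nat -> rho r p i = rho r p j -> i = j) /\
  (forall z : C, f_rp r p z = RtoC 0 -> exists i : nat, (i < p)%nat /\ z = rho r p i) /\
  Im (rho r p 0) = 0 /\
  (forall i : nat, (0 < i < p)%nat -> Im (rho r p i) <> 0).
Proof.
  pose proof (prime_ge_2 _ hp) as Hp2.
  assert (Hp : (0 < p)%nat) by lia.
  assert (hr0 : r <> 0%Z) by (intro; subst; apply hr; apply Z.divide_0_r).
  assert (hk := p_odd p hp hodd).
  pose proof s_facts as [Hss Hs1].
  pose proof (realkey p r Hp hk) as Hkey.
  pose proof (abs_m p r) as Habs.
  pose proof (c_ne1 p r Hp hr0) as Hc1.
  pose proof (m_ne0 p r) as Hm0.
  pose proof (zeta_p p Hp) as Hzp.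
  set (m := powerRZ (-1) r * Rpower (1 + sqrt 2) (-2 * IZR r / INR p)) in *.
  set (s := sqrt 2) in *.
  set (A := powerRZ (1 + s) r) in *. set (B := powerRZ (1 - s) r) in *.
  assert (HA : A <> 0).
  { unfold A. rewrite powerRZ_Rpower by lra. unfold Rpower. apply Rgt_not_eq, exp_pos. }
  assert (Hw1 : forall i, (RtoC m * Cpow (zeta p) i - RtoC 1 <> RtoC 0)%C).
  { intros i H. apply Ceq_minus in H. apply (f_equal Cmod) in H.
    rewrite Cmod_mult, Cmod_R, zeta_pow, Cmod_E, Cmod_1, Habs, Rmult_1_r in H. auto. }
  assert (Hrho : forall i, rho r p i = (RtoC s + (RtoC 2 * RtoC s) / (RtoC m * Cpow (zeta p) i - RtoC 1))%C)
    by (intro; unfold rho; rewrite <- RtoC_mult; reflexivity).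
  assert (Hf : forall z, f_rp r p z =
     ((RtoC A * Cpow (z + RtoC s) p - RtoC B * Cpow (z - RtoC s) p) / (RtoC 2 * RtoC s))%C)
    by (intro; unfold f_rp; rewrite <- RtoC_mult; reflexivity).
  assert (H2s : RtoC 2 <> RtoC 0) by (apply RtoC_neq0; lra).
  assert (Hs0 : RtoC s <> RtoC 0) by (apply RtoC_neq0; lra).
  assert (Hwp : forall i, Cpow (RtoC m * Cpow (zeta p) i)%C p = Cpow (RtoC m) p).
  { intro i. rewrite Cpow_mult_l, <- Cpow_mult_r, Nat.mul_comm, Cpow_mult_r, Hzp, Cpow_1_l, Cmult_1_r.
    reflexivity. }
  assert (Hinv : forall i, (RtoC m * Cpow (zeta p) i = RtoC 1 + (RtoC 2 * RtoC s) / (rho r p i - RtoC s))%C).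
  { intro i. rewrite Hrho. specialize (Hw1 i). field. cbv beta. repeat split; auto.
    match goal with |- ?x <> _ => replace x with (RtoC 2 * RtoC s)%C by ring end. apply Cmult_neq_0; auto. }
  split; [|split; [|split; [|split]]].
  - intros i Hi. rewrite Hf, Hrho. specialize (Hw1 i). specialize (Hwp i).
    set (w := (RtoC m * Cpow (zeta p) i)%C) in *.
    replace (RtoC s + (RtoC 2 * RtoC s) / (w - RtoC 1) + RtoC s)%C with ((RtoC 2 * RtoC s) / (w - RtoC 1) * w)%C
      by (field; cbv beta; repeat split; auto).
    replace (RtoC s + (RtoC 2 * RtoC s) / (w - RtoC 1) - RtoC s)%C with ((RtoC 2 * RtoC s) / (w - RtoC 1))%C
      by (field; cbv beta; repeat split; auto).
    rewrite Cpow_mult_l, Hwp, Hkey, RtoC_mult, RtoC_pow.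
    unfold Cdiv at 1. match goal with |- (?x * _)%C = _ => replace x with (RtoC 0) by ring end.
    apply Cmult_0_l.
  - intros i j Hi Hj H.
    assert (Hij : (RtoC m * Cpow (zeta p) i = RtoC m * Cpow (zeta p) j)%C) by (rewrite !Hinv, H; reflexivity).
    apply (zeta_inj p); auto.
    apply (f_equal (fun x => / RtoC m * x)%C) in Hij.
    assert (RtoC m <> RtoC 0) by (apply RtoC_neq0; auto).
    rewrite !Cmult_assoc, Cinv_l, !Cmult_1_l in Hij by auto. exact Hij.
  - intros z Hz. rewrite Hf in Hz.
    assert (H2s' : (RtoC 2 * RtoC s <> 0)%C) by (apply Cmult_neq_0; auto).
    assert (HD : (RtoC A * Cpow (z + RtoC s) p - RtoC B * Cpow (z - RtoC s) p = 0)%C).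
    { apply (f_equal (fun x => x * (RtoC 2 * RtoC s))%C) in Hz. rewrite Cmult_0_l in Hz.
      rewrite <- Hz. field. auto. }
    assert (HAc : RtoC A <> RtoC 0) by (apply RtoC_neq0; auto).
    assert (HmC : RtoC m <> RtoC 0) by (apply RtoC_neq0; auto).
    assert (Hzs : (z - RtoC s <> 0)%C).
    { intro H0. assert (Hz' : z = RtoC s) by (apply Ceq_minus; exact H0).
      rewrite Hz' in HD. replace (RtoC s - RtoC s)%C with (RtoC 0) in HD by ring.
      replace (RtoC s + RtoC s)%C with (RtoC 2 * RtoC s)%C in HD by ring.
      destruct p as [|p']; [lia|]. rewrite (Cpow_S (RtoC 0)), Cmult_0_l in HD.
      replace (RtoC A * Cpow (RtoC 2 * RtoC s) (S p') - RtoC B * RtoC 0)%C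
        with (RtoC A * Cpow (RtoC 2 * RtoC s) (S p'))%C in HD by ring.
      revert HD. apply Cmult_neq_0; auto. apply Cpow_nz; auto. }
    set (w := ((z + RtoC s) / (z - RtoC s))%C).
    assert (H1 : Cpow (z + RtoC s) p = (Cpow (RtoC m) p * Cpow (z - RtoC s) p)%C).
    { assert (H1' : (RtoC A * (Cpow (z + RtoC s) p - Cpow (RtoC m) p * Cpow (z - RtoC s) p) = 0)%C).
      { rewrite <- HD, Hkey, RtoC_mult, RtoC_pow. ring. }
      apply Ceq_minus.
      apply (f_equal (fun x => / RtoC A * x)%C) in H1'.
      rewrite Cmult_assoc, Cinv_l, Cmult_1_l, Cmult_0_r in H1' by auto. exact H1'. }
    assert (HwP : Cpow w p = Cpow (RtoC m) p).
    { unfold w. unfold Cdiv. rewrite Cpow_mult_l, Cpow_inv by auto. rewrite H1.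
      field. apply Cpow_nz; auto. }
    assert (Hv : Cpow (w / RtoC m)%C p = RtoC 1).
    { unfold Cdiv. rewrite Cpow_mult_l, Cpow_inv, HwP by auto. apply Cinv_r. apply Cpow_nz; auto. }
    destruct (unity_root p _ Hp Hv) as [k [Hk Hvk]].
    exists k. split; auto. rewrite Hrho.
    replace (RtoC m * Cpow (zeta p) k)%C with w by (rewrite <- Hvk; field; auto).
    unfold w. field. cbv beta. repeat split; auto.
    match goal with |- ?x <> _ => replace x with (RtoC 2 * RtoC s)%C by ring end; auto.
  - assert (Hm1 : m - 1 <> 0).
    { intro H0. apply (Hw1 0%nat). change (Cpow (zeta p) 0) with (RtoC 1).
      rewrite Cmult_1_r, <- RtoC_minus, H0. reflexivity. }
    rewrite Hrho. change (Cpow (zeta p) 0) with (RtoC 1).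
    rewrite Cmult_1_r, <- RtoC_minus, <- RtoC_mult, <- RtoC_div, <- RtoC_plus by auto.
    apply im_RtoC.
  - intros i [Hi0 Hi]. rewrite Hrho, zeta_pow. set (t := INR i * (2 * PI / INR p)).
    assert (HpR : INR p <> 0) by (apply not_0_INR; lia).
    pose proof PI_RGT_0 as HPI.
    assert (Hsin : sin t <> 0).
    { intro H0. destruct (sin_eq_0_0 _ H0) as [k Hk']. unfold t in Hk'.
      assert (H2 : 2 * INR i = IZR k * INR p).
      { apply (Rmult_eq_reg_r (PI / INR p)).
        - replace (2 * INR i * (PI / INR p)) with (INR i * (2 * PI / INR p)) by (field; auto).
          rewrite Hk'. field. auto.
        - unfold Rdiv. apply Rmult_integral_contrapositive_currified; [lra|].
          apply Rinv_neq_0_compat; auto. }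
      rewrite !INR_IZR_INZ, <- mult_IZR, <- mult_IZR in H2. apply eq_IZR in H2.
      destruct hk as [k0 Hk0]. rewrite Hk0 in H2.
      destruct (Z.lt_trichotomy k 1) as [h|[h|h]]; [nia|subst; lia|nia]. }
    set (X := m * cos t - 1). set (Y := m * sin t).
    assert (HY : Y <> 0) by (unfold Y; apply Rmult_integral_contrapositive_currified; auto).
    assert (HXY : X ^ 2 + Y ^ 2 <> 0) by (intro; nra).
    replace (Im (RtoC s + RtoC 2 * RtoC s / (RtoC m * E t - RtoC 1))%C) with (- (2 * s * Y) / (X ^ 2 + Y ^ 2)).
    + unfold Rdiv. apply Rmult_integral_contrapositive_currified.
      * apply Ropp_neq_0_compat. apply Rmult_integral_contrapositive_currified; auto. lra.
      * apply Rinv_neq_0_compat; auto.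
    + unfold X, Y, E, Cdiv, Cinv, Cmult, Cplus, Cminus, Copp, RtoC, Im; simpl.
      field. intro H0; apply HXY; unfold X, Y; rewrite <- H0; ring.
Qed.
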